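(* Let $R$ be an associative ring with identity which is left quasi-morphic. Then $R$ is left uniquely generated if and only if $R$ has stable range one.
   Context: For $a \in R$, $\operatorname{ann}_l(a) = \{r \in R : ra = 0\}$. $R$ is left quasi-morphic if the set of principal left ideals $\{Ra : a \in R\}$ coincides with the set of left annihilators $\{\operatorname{ann}_l(b) : b \in R\}$. $R$ is left uniquely generated if for all $a, b \in R$ with $Ra = Rb$ there exists a unit $u$ of $R$ with $a = ub$. $R$ has stable range one if whenever $a, b, x \in R$ satisfy $ax + b = 1$, there exists $y \in R$ such that $a + by$ is a unit of $R$. *)

(* Defs.v *)
From mathcomp Require Import all_boot all_algebra.
Set Implicit Arguments. Unset Strict Implicit. Unset Printing Implicit Defensive.
Import GRing.Theory.
Local Open Scope ring_scope.

Definition lprinc (R : unitRingType) (a : R) : R -> Prop :=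
  fun x => exists r : R, x = r * a.

Definition ann_l (R : unitRingType) (b : R) : R -> Prop :=
  fun r => r * b = 0.

Definition same_set (R : Type) (P Q : R -> Prop) : Prop :=
  forall x, P x <-> Q x.

Definition left_quasi_morphic (R : unitRingType) : Prop :=
  (forall a : R, exists b : R, same_set (lprinc a) (ann_l b)) /\
  (forall b : R, exists a : R, same_set (ann_l b) (lprinc a)).

Definition left_uniquely_generated (R : unitRingType) : Prop :=
  forall a b : R, same_set (lprinc a) (lprinc b) ->
    exists u : R, u \is a GRing.unit /\ a = u * b.

Definition stable_range_one (R : unitRingType) : Prop :=
  forall a b x : R, a * x + b = 1 ->
    exists y : R, (a + b * y) \is a GRing.unit.

(* Main.v *)
Require Import Defs.
From mathcomp Require Import all_boot all_algebra.
Import GRing.Theory.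
Local Open Scope ring_scope.

Lemma addAC3 (V : zmodType) (A B C : V) (o : V) : A + B - C + (o - B - (A - C)) = o.
Proof. rewrite opprB addrA (addrC o) !addrA (addrAC A B) addrK (addrAC (A - C) o) subrK addrAC subrr add0r //. Qed.
Lemma H1 (V : zmodType) (z y P Q S T : V) : z + y - (P + Q) - (S - T) = y + z - Q - (S + P - T).
Proof. rewrite !opprB !opprD !addrA (addrC z y).
by rewrite (addrAC (y+z) (-P) (-Q)) (addrAC (y+z-Q) (-P) T) (addrAC (y+z-Q+T) (-P) (-S)). Qed.
Lemma H3 (V : zmodType) (z y Y Q W T : V) : z + y - Y - (Q + W - T) = y + z - (W + Y) - (Q - T).
Proof. rewrite !opprB !opprD !addrA (addrC z y).
by rewrite (addrAC (y+z) (-W) (-Y)) (addrAC (y+z-Y) (-W) T) (addrAC (y+z-Y+T) (-W) (-Q)). Qed.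

Ltac ex := rewrite !(mulrBl, mulrBr, mulrDl, mulrDr, mul1r, mulr1, mulrA).

Section S.
Variable R : unitRingType.

Lemma I1 (x y z : R) : (z + y - z*x*y)*(1 - x*z) = (1 - z*x)*(y + z - y*x*z).
Proof. ex. exact: H1. Qed.
Lemma I2 (x y z : R) : (z + y - z*x*y)*x + (1-z*x)*(1-y*x) = 1.
Proof. ex. exact: addAC3. Qed.
Lemma I3 (x y z : R) : (1-y*x)*(z + y - z*x*y) = (y + z - y*x*z)*(1 - x*y).
Proof. ex. exact: H3. Qed.
Lemma I4 (x y z : R) : x*(z + y - z*x*y) + (1-x*z)*(1-x*y) = 1.
Proof. ex. exact: addAC3. Qed.

Lemma J (x y z : R) : y + z - y*x*z \is a GRing.unit -> z + y - z*x*y \is a GRing.unit.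
Proof.
move=> Hv; apply/unitrP.
have E1 := I1 x y z; have E2 := I2 x y z; have E3 := I3 x y z; have E4 := I4 x y z.
move: Hv E1 E2 E3 E4.
set v := y + z - y*x*z; set w := z + y - z*x*y. move=> Hv E1 E2 E3 E4.
exists (x + (1 - x*z) * v^-1 * (1 - y*x)); split.
- by rewrite mulrDl -!mulrA E3 (mulKr Hv).
- by rewrite mulrDr !mulrA E1 -(mulrA _ v) (mulrV Hv) mulr1.
Qed.

Definition lsr1 := forall a b x : R, x * a + b = 1 ->
    exists y : R, (a + y * b) \is a GRing.unit.

Lemma r_to_l : stable_range_one R -> lsr1.
Proof.
move=> H a b x Hb.
have -> : b = 1 - x*a by rewrite -Hb addrC addKr.
have HH : a * x + (1 - a*x) = 1 by rewrite addrC subrK.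
 have [y Hy] := H a (1 - a*x) x HH.
exists y.
have E : a + (1 - a*x)*y = a + y - a*x*y by rewrite mulrBl mul1r addrA.
rewrite E in Hy; have := J x a y Hy.
by rewrite mulrBr mulr1 mulrA addrA (addrC a y).
Qed.

Lemma l_to_r : lsr1 -> stable_range_one R.
Proof.
move=> H a b x Hb.
have -> : b = 1 - a*x by rewrite -Hb addrC addKr.
have HH : x * a + (1 - x*a) = 1 by rewrite addrC subrK.
 have [y Hy] := H a (1 - x*a) x HH.
exists y.
have E : a + y*(1 - x*a) = y + a - y*x*a by rewrite mulrBr mulr1 mulrA addrA (addrC a y).
rewrite E in Hy; have := J x y a Hy.
by rewrite mulrBl mul1r addrA.
Qed.

Lemma l_to_ug : lsr1 -> left_uniquely_generated R.
Proof.
move=> H a b Hab.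
have [s Hs] : lprinc b a by apply/Hab; exists 1; rewrite mul1r.
have [t Ht] : lprinc a b by apply/Hab; exists 1; rewrite mul1r.
have HH : t * s + (1 - t*s) = 1 by rewrite addrC subrK.
 have [y Hy] := H s (1 - t*s) t HH.
exists (s + y*(1 - t*s)); split => //.
rewrite mulrDl -mulrA mulrBl mul1r -mulrA -Hs -Ht subrr mulr0 addr0 //.
Qed.

Lemma ug_to_l : left_quasi_morphic R -> left_uniquely_generated R -> lsr1.
Proof.
move=> [Q1 _] U a b x Hb.
have [be Hbe] := Q1 b.
have bbe : b * be = 0 by apply/Hbe; exists 1; rewrite mul1r.
have Ebe : be = x * (a * be).
  by rewrite mulrA -[LHS]mul1r -Hb mulrDl bbe addr0.
have [u [Hu Eu]] : exists u : R, u \is a GRing.unit /\ a * be = u * be.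
  apply: U => r; split.
  - by move=> [s ->]; exists (s * a); rewrite mulrA.
  - by move=> [s ->]; exists (s * x); rewrite -mulrA -Ebe.
have : ann_l be (a - u) by rewrite /ann_l mulrBl Eu subrr.
move/Hbe => [r Er].
exists (- r); rewrite mulNr -Er opprB addrC subrK //.
Qed.

End S.

Theorem theorem5 (R : unitRingType) :
  left_quasi_morphic R ->
  (left_uniquely_generated R <-> stable_range_one R).
Proof.
move=> Q; split.
- by move=> U; apply: l_to_r; apply: ug_to_l.
- by move=> S; apply: l_to_ug; apply: r_to_l.
Qed.
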